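(* Let $C$ be a $k$-context of the call-by-value $\lambda$-calculus and $V_1,\dots,V_k$ values. Then $$\mathcal{T}(C[V_1,\dots,V_k])=\big\{\tilde c[\vec v^{\,1},\dots,\vec v^{\,k}]\ \big|\ c\in\mathcal{T}(C),\ \tilde c\text{ a rigid of }c,\ \vec v^{\,i}=\langle v^i_1,\dots,v^i_{\deg_{\Box_i}(c)}\rangle \text{ with } [v^i_1,\dots,v^i_{\deg_{\Box_i}(c)}]\in\mathcal{T}(V_i)\text{ for all } i\big\}.$$
   Context: CbV $\lambda$-terms are ordinary $\lambda$-terms $M::=x\mid \lambda x.M\mid MM$; values are variables and abstractions. A $k$-context $C$ is a $\lambda$-term possibly containing holes $\Box_1,\dots,\Box_k$ (each any number of times); $C[M_1,\dots,M_k]$ denotes filling $\Box_i$ with $M_i$ (variable capture allowed). Resource CbV terms: resource values $v::=x\mid \lambda x.s$ and resource simple terms $s::= s_1s_2\mid [v_1,\dots,v_n]$ ($n\ge 0$, brackets denote finite multisets, ''bags''), up to $\alpha$-equivalence. Resource $k$-contexts: $c^v::=\Box_1\mid\dots\mid\Box_k\mid x\mid \lambda x.c^s$, $c^s::=c^s_1c^s_2\mid[c^v_1,\dots,c^v_n]$. $\deg_{\Box_i}(c)$ is the number of occurrences of $\Box_i$ in $c$. Taylor expansion: $\mathcal{T}(x)=\{[x,\dots,x]\ (n \text{ copies})\mid n\in\mathbb N\}$, $\mathcal{T}(\Box_i)=\{[\Box_i,\dots,\Box_i]\ (n\text{ copies})\mid n\in\mathbb N\}$, $\mathcal{T}(\lambda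 x.M)=\{[\lambda x.s_1,\dots,\lambda x.s_n]\mid n\in\mathbb N,\ s_j\in\mathcal{T}(M)\}$, $\mathcal{T}(M_1M_2)=\{s_1s_2\mid s_j\in\mathcal{T}(M_j)\}$. Rigids of a resource context $c$ (ordered-list versions): $\mathrm{Rigid}(\Box_i)=\{\Box_i\}$, $\mathrm{Rigid}(x)=\{x\}$, $\mathrm{Rigid}(\lambda x.c_0)=\{\lambda x.\tilde c_0\mid\tilde c_0\in\mathrm{Rigid}(c_0)\}$, $\mathrm{Rigid}(c_0c_1)=\{\tilde c_0\tilde c_1\mid \tilde c_j\in\mathrm{Rigid}(c_j)\}$, $\mathrm{Rigid}([c_1,\dots,c_n])=\{\langle\tilde c_{\sigma(1)},\dots,\tilde c_{\sigma(n)}\rangle\mid\sigma\text{ a permutation},\ \tilde c_j\in\mathrm{Rigid}(c_j)\}$. Filling a rigid $\tilde c$ of $c$ with lists $\vec v^{\,i}$ of resource values of length $\deg_{\Box_i}(c)$: for $\tilde c=\Box_i$, the result is the unique value in $\vec v^{\,i}$; for $x$ it is $x$; $(\lambda x.\tilde c_0)[\vec v^{\,1},\dots,\vec v^{\,k}]=\lambda x.\tilde c_0[\vec v^{\,1},\dots,\vec v^{\,k}]$; for $\tilde c_1\tilde c_2$, split each $\vec v^{\,i}=\vec w^{\,i1}\vec w^{\,i2}$ with $\vec w^{\,ij}$ of length $\deg_{\Box_i}(c_j)$, result $\tilde c_1[\vec w^{\,11},\dots,\vec w^{\,k1}]\,\tilde c_2[\vec w^{\,12},\dots,\vec w^{\,k2}]$;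 for $\langle\tilde c_{\sigma(1)},\dots,\tilde c_{\sigma(n)}\rangle$, split $\vec v^{\,i}=\vec w^{\,i1}\cdots\vec w^{\,in}$ with $\vec w^{\,ij}$ of length $\deg_{\Box_i}(c_{\sigma(j)})$, result the bag $[\tilde c_{\sigma(1)}[\vec w^{\,11},\dots,\vec w^{\,k1}],\dots,\tilde c_{\sigma(n)}[\vec w^{\,1n},\dots,\vec w^{\,kn}]]$. *)

(* Defs.v *)
From mathcomp Require Import all_boot.
From Stdlib Require Import Permutation.

Set Implicit Arguments.
Unset Strict Implicit.
Unset Printing Implicit Defensive.

(* (the paper's Box_1..Box_k are Hole 0 .. Hole (k-1)).  Plain        *)
(* lambda-terms are the 0-contexts [term 0].  Variables are names      *)
(* (nat); filling is plain syntactic replacement (capture allowed).   *)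
Inductive term (k : nat) : Type :=
| Var  : nat -> term k
| Hole : 'I_k -> term k
| Lam  : nat -> term k -> term k
| App  : term k -> term k -> term k.

Arguments Var {k} _.
Arguments Hole {k} _.
Arguments Lam {k} _ _.
Arguments App {k} _ _.

Definition is_value (M : term 0) : Prop :=
  match M with Var _ | Lam _ _ => True | _ => False end.

Fixpoint fill (k : nat) (C : term k) (Ms : 'I_k -> term 0) : term 0 :=
  match C with
  | Var x => Var x
  | Hole i => Ms i
  | Lam x C0 => Lam x (fill C0 Ms)
  | App C1 C2 => App (fill C1 Ms) (fill C2 Ms)
  end.

(* A bag is represented by a list; the multiset quotient is taken via  *)
(* the equivalence [req] below.  The same list syntax also represents  *)
(* rigids (ordered lists).                                             *)
Inductive rval (k : nat) : Type :=
| RVar  : nat -> rval k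
| RHole : 'I_k -> rval k
| RLam  : nat -> rterm k -> rval k
with rterm (k : nat) : Type :=
| RApp : rterm k -> rterm k -> rterm k
| RBag : list (rval k) -> rterm k.

Arguments RVar {k} _.
Arguments RHole {k} _.
Arguments RLam {k} _ _.
Arguments RApp {k} _ _.
Arguments RBag {k} _.

Inductive reqv (k : nat) : rval k -> rval k -> Prop :=
| reqv_var x : reqv (RVar x) (RVar x)
| reqv_hole i : reqv (RHole i) (RHole i)
| reqv_lam x s s' : reqs s s' -> reqv (RLam x s) (RLam x s')
with reqs (k : nat) : rterm k -> rterm k -> Prop :=
| reqs_app s1 s2 s1' s2' : reqs s1 s1' -> reqs s2 s2' ->
    reqs (RApp s1 s2) (RApp s1' s2')
| reqs_bag (l l1 l' : list (rval k)) :
    List.Forall2 (@reqv k) l l1 -> Permutation l1 l' -> reqs (RBag l) (RBag l').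

Inductive taylor (k : nat) : term k -> rterm k -> Prop :=
| taylor_var x n : taylor (Var x) (RBag (nseq n (RVar x)))
| taylor_hole i n : taylor (Hole i) (RBag (nseq n (RHole i)))
| taylor_lam x M (ss : list (rterm k)) :
    (forall s, List.In s ss -> taylor M s) ->
    taylor (Lam x M) (RBag (map (RLam x) ss))
| taylor_app M1 M2 s1 s2 : taylor M1 s1 -> taylor M2 s2 ->
    taylor (App M1 M2) (RApp s1 s2).

Definition inT (k : nat) (M : term k) (s : rterm k) : Prop :=
  exists s', taylor M s' /\ reqs s s'.

(* Rigids: rigid c ct  means  ct \in Rigid(c). *)
Inductive rigidv (k : nat) : rval k -> rval k -> Prop :=
| rigidv_var x : rigidv (RVar x) (RVar x)
| rigidv_hole i : rigidv (RHole i) (RHole i)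
| rigidv_lam x c ct : rigids c ct -> rigidv (RLam x c) (RLam x ct)
with rigids (k : nat) : rterm k -> rterm k -> Prop :=
| rigids_app c1 c2 ct1 ct2 : rigids c1 ct1 -> rigids c2 ct2 ->
    rigids (RApp c1 c2) (RApp ct1 ct2)
| rigids_bag (l lt lts : list (rval k)) :
    List.Forall2 (@rigidv k) l lt -> Permutation lt lts ->
    rigids (RBag l) (RBag lts).

Fixpoint degv (k : nat) (i : 'I_k) (v : rval k) : nat :=
  match v with
  | RVar _ => 0
  | RHole j => (i == j : nat)
  | RLam _ s => degs i s
  end
with degs (k : nat) (i : 'I_k) (s : rterm k) : nat :=
  match s with
  | RApp s1 s2 => degs i s1 + degs i s2
  | RBag l => (fix go (l : list (rval k)) : nat :=
                 match l with nil => 0 | v :: l' => degv i v + go l' end) l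
  end.

Definition dummy_rval : rval 0 := RVar 0.

(* Filling a rigid ct with lists vs i of resource values (of length
   deg_{Box_i}(ct)); lists are split consecutively as in the paper. *)
Fixpoint fillv (k : nat) (v : rval k) (vs : 'I_k -> list (rval 0)) : rval 0 :=
  match v with
  | RVar x => RVar x
  | RHole i => head dummy_rval (vs i)
  | RLam x s => RLam x (fills s vs)
  end
with fills (k : nat) (s : rterm k) (vs : 'I_k -> list (rval 0)) : rterm 0 :=
  match s with
  | RApp s1 s2 =>
      RApp (fills s1 (fun i => take (degs i s1) (vs i)))
           (fills s2 (fun i => drop (degs i s1) (vs i)))
  | RBag l =>
      RBag ((fix go (l : list (rval k)) (vs : 'I_k -> list (rval 0))
               : list (rval 0) :=
               match l with
               | nil => nil
               | v :: l' => fillv v (fun i => take (degv i v) (vs i))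
                            :: go l' (fun i => drop (degv i v) (vs i))
               end) l vs)
  end.

(* Main.v *)
Require Import Defs.
From mathcomp Require Import all_boot.
From Stdlib Require Import Permutation FunctionalExtensionality.

Set Implicit Arguments.
Unset Strict Implicit.
Unset Printing Implicit Defensive.

Section RInd.
Variable k : nat.
Variables (P : rterm k -> Prop) (Q : rval k -> Prop).
Hypothesis Hvar : forall x, Q (RVar x).
Hypothesis Hhole : forall i, Q (RHole i).
Hypothesis Hlam : forall x s, P s -> Q (RLam x s).
Hypothesis Happ : forall s1 s2, P s1 -> P s2 -> P (RApp s1 s2).
Hypothesis Hbag : forall l, List.Forall Q l -> P (RBag l).

Fixpoint rterm_ind2 (s : rterm k) : P s :=
  match s with
  | RApp s1 s2 => Happ (rterm_ind2 s1) (rterm_ind2 s2)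
  | RBag l => Hbag ((fix go (l : list (rval k)) : List.Forall Q l :=
                      match l with
                      | nil => @List.Forall_nil _ Q
                      | v :: l' => @List.Forall_cons _ Q v l' (rval_ind2 v) (go l')
                      end) l)
  end
with rval_ind2 (v : rval k) : Q v :=
  match v with
  | RVar x => Hvar x
  | RHole i => Hhole i
  | RLam x s => Hlam x (rterm_ind2 s)
  end.
End RInd.

Fixpoint degsl (k : nat) (i : 'I_k) (l : list (rval k)) : nat :=
  match l with nil => 0 | v :: l' => degv i v + degsl i l' end.

Fixpoint fillsl (k : nat) (l : list (rval k)) (vs : 'I_k -> list (rval 0)) : list (rval 0) :=
  match l with
  | nil => nil
  | v :: l' => fillv v (fun i => take (degv i v) (vs i))
               :: fillsl l' (fun i => drop (degv i v) (vs i))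
  end.

Lemma degs_bag k (i : 'I_k) l : degs i (RBag l) = degsl i l.
Proof. by elim: l => //= v l ->. Qed.

Lemma fills_bag k (l : list (rval k)) vs : fills (RBag l) vs = RBag (fillsl l vs).
Proof.
elim: l vs => //= v l IH vs.
by case: (IH (fun i => drop (degv i v) (vs i))) => ->.
Qed.

Lemma reqs_refl k (s : rterm k) : reqs s s.
Proof.
move: s; apply: (@rterm_ind2 k (fun s => reqs s s) (fun v => reqv v v)).
- by move=> x; constructor.
- by move=> x; constructor.
- by move=> x s H; constructor.
- by move=> s1 s2 H1 H2; constructor.
- move=> l H; apply: (@reqs_bag _ l l l) => //.
  elim: H => [|v l' Hv _ IH]; by constructor.
Qed.

Lemma reqv_refl k (v : rval k) : reqv v v.
Proof. case: v => *; constructor; exact: reqs_refl. Qed.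

Lemma Forall2_trans A (R : A -> A -> Prop) (l l1 l2 : list A) :
  List.Forall (fun v => forall v' v'', R v v' -> R v' v'' -> R v v'') l ->
  List.Forall2 R l l1 -> List.Forall2 R l1 l2 -> List.Forall2 R l l2.
Proof.
move=> H H1; elim: H1 l2 H => [|a b l' l1' Hab _ IH] l2 H H2.
  by inversion H2.
inversion H2 as [|b' c l1'' l2' Hbc Hr]; subst.
inversion H as [|a' l0 Ha Hl]; subst.
constructor; [exact: (Ha _ _ Hab Hbc) | exact: IH].
Qed.

Lemma reqs_trans k (s s' s'' : rterm k) : reqs s s' -> reqs s' s'' -> reqs s s''.
Proof.
move: s s' s''.
apply: (@rterm_ind2 k (fun s => forall s' s'', reqs s s' -> reqs s' s'' -> reqs s s'')
        (fun v => forall v' v'', reqv v v' -> reqv v' v'' -> reqv v v'')).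
- by move=> x v' v'' H1 H2; inversion H1; subst; inversion H2; subst.
- by move=> x v' v'' H1 H2; inversion H1; subst; inversion H2; subst.
- move=> x s IH v' v'' H1 H2.
  inversion H1 as [| |x0 s0 s1 Hs]; subst.
  inversion H2 as [| |x1 s2 s3 Hs']; subst.
  constructor; exact: IH Hs Hs'.
- move=> s1 s2 IH1 IH2 s' s'' H1 H2.
  inversion H1 as [a1 a2 b1 b2 Ha1 Ha2|]; subst.
  inversion H2 as [c1 c2 d1 d2 Hc1 Hc2|]; subst.
  constructor; [exact: IH1 Ha1 Hc1 | exact: IH2 Ha2 Hc2].
- move=> l IH s' s'' H1 H2.
  inversion H1 as [|l0 l1 l' F1 P1]; subst.
  inversion H2 as [|l2 l3 l'' F2 P2]; subst.
  have [l4 [P3 F3]] := Permutation_Forall2 (Permutation_sym P1) F2.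
  apply: (@reqs_bag _ l l4).
    exact: Forall2_trans IH F1 F3.
  exact: Permutation_trans (Permutation_sym P3) P2.
Qed.

Lemma rigids_refl k (s : rterm k) : rigids s s.
Proof.
move: s; apply: (@rterm_ind2 k (fun s => rigids s s) (fun v => rigidv v v)).
- by move=> x; constructor.
- by move=> x; constructor.
- by move=> x s H; constructor.
- by move=> s1 s2 H1 H2; constructor.
- move=> l H; apply: (@rigids_bag _ l l l) => //.
  elim: H => [|v l' Hv _ IH]; by constructor.
Qed.

Lemma degsl_perm k (i : 'I_k) l l' : Permutation l l' -> degsl i l = degsl i l'.
Proof.
elim => //= [v l1 l2 _ -> | v w l1 | l1 l2 l3 _ -> _ ->] //.
by rewrite !addnA [degv i w + _]addnC.
Qed.

Lemma rigid_deg k (c ct : rterm k) : rigids c ct -> forall i, degs i c = degs i ct.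
Proof.
move: c ct.
apply: (@rterm_ind2 k (fun c => forall ct, rigids c ct -> forall i, degs i c = degs i ct)
        (fun v => forall vt, rigidv v vt -> forall i, degv i v = degv i vt)).
- by move=> x vt H; inversion H.
- by move=> x vt H; inversion H.
- move=> x s IH vt H; inversion H as [| |x0 c0 ct0 Hc]; subst => i /=; exact: IH.
- move=> s1 s2 IH1 IH2 ct H; inversion H as [a1 a2 b1 b2 H1 H2|]; subst => i /=.
  by rewrite (IH1 _ H1) (IH2 _ H2).
- move=> l IH ct H; inversion H as [|l0 lt lts F P]; subst => i.
  rewrite !degs_bag -(degsl_perm i P).
  elim: F IH => //= a b l1 l2 Hab _ IHl IH; inversion IH; subst.
  by rewrite (H2 _ Hab) IHl.
Qed.

Definition valT (V : term 0) (w : rval 0) : Prop :=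
  match V with
  | Var x => w = RVar x
  | Lam x M => exists s, w = RLam x s /\ inT M s
  | _ => False
  end.

Lemma val_taylor V t : is_value V -> taylor V t ->
  exists l, t = RBag l /\ List.Forall (valT V) l.
Proof.
case: V => //= [x|x M] _ H.
- inversion H; subst.
  exists (nseq n (RVar x)); split => //; elim: n {H} => /= [|n IH]; by constructor.
- inversion H as [| |x0 M0 ss H2|]; subst.
  exists (map (RLam x) ss); split => //.
  elim: ss {H} H2 => /= [|a ss IH] H2; constructor.
    exists a; split => //; exists a; split; [apply: H2; left | apply: reqs_refl] => //.
  apply: IH => s Hs; apply: H2; by right.
Qed.

Lemma valT_reqv V w w' : reqv w w' -> valT V w' -> valT V w.
Proof.
case: V => //= [x|x M] H.
- by move=> E; subst; inversion H.
- move=> [s' [E [t [Ht Hr]]]]; subst; inversion H as [| |x0 s0 s1 Hs]; subst.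
  exists s0; split => //; exists t; split => //; exact: reqs_trans Hs Hr.
Qed.

Lemma inT_val V l : is_value V -> inT V (RBag l) -> List.Forall (valT V) l.
Proof.
move=> HV [t [Ht Hr]]; have [l' [E F]] := val_taylor HV Ht; subst.
inversion Hr as [|l0 l1 l2 F2 P2]; subst.
have F1 := Permutation_Forall (Permutation_sym P2) F.
elim: F2 F1 => // a b la lb Hab _ IH F1; inversion F1; subst.
constructor; [exact: valT_reqv Hab _ | exact: IH].
Qed.

Lemma val_inT V l : is_value V -> List.Forall (valT V) l -> inT V (RBag l).
Proof.
case: V => //= [x|x M] _ F.
- have -> : l = nseq (size l) (RVar x).
    by elim: F => //= a l' -> _ {1}->.
  exists (RBag (nseq (size l) (RVar x))); split; [constructor | exact: reqs_refl].
- have [ss [Hss F2]] : exists ss, (forall s, List.In s ss -> taylor M s) /\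
        List.Forall2 (@reqv 0) l (map (RLam x) ss).
    elim: F => [|a l' [s [E [t [Ht Hr]]]] _ [ss [Hss F2]]].
      by exists nil; split => //; constructor.
    exists (t :: ss); split.
      by move=> s0 [<-|Hs0]; [exact: Ht | exact: Hss].
    by subst; constructor => //; constructor.
  exists (RBag (map (RLam x) ss)); split; first by constructor.
  exact: (@reqs_bag _ l (map (RLam x) ss)).
Qed.

Lemma Forall_cat A (P : A -> Prop) (l1 l2 : seq A) :
  List.Forall P l1 -> List.Forall P l2 -> List.Forall P (l1 ++ l2).
Proof. by elim=> //= a l Ha _ IH H2; constructor => //; exact: IH. Qed.

Lemma Forall_take A (P : A -> Prop) n (l : seq A) :
  List.Forall P l -> List.Forall P (take n l).
Proof. by elim: l n => [|a l IH] [|n] //= H; inversion H; subst; constructor => //; apply: IH. Qed.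

Lemma Forall_drop A (P : A -> Prop) n (l : seq A) :
  List.Forall P l -> List.Forall P (drop n l).
Proof. by elim: l n => [|a l IH] [|n] //= H; inversion H; subst => //; apply: IH. Qed.

Lemma fillsl_var k x (l : list (rval k)) vs :
  List.Forall (fun v => v = RVar x) l -> fillsl l vs = map (fun _ => RVar x) l.
Proof. by move=> F; elim: F vs => //= a l' -> _ IH vs; rewrite IH. Qed.

Lemma degsl_var k x (i : 'I_k) (l : list (rval k)) :
  List.Forall (fun v => v = RVar x) l -> degsl i l = 0.
Proof. by elim=> //= a l' -> _ ->. Qed.

Lemma degsl_hole k (i j : 'I_k) m : degsl j (nseq m (RHole i)) = (j == i) * m.
Proof. by elim: m => [|m IH] /=; [rewrite muln0 | rewrite IH mulnS]. Qed.

Lemma fillsl_hole k (i : 'I_k) m vs : m <= size (vs i) ->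
  fillsl (nseq m (RHole i)) vs = take m (vs i).
Proof.
elim: m vs => [|m IH] vs Hm; first by rewrite take0.
rewrite /= IH /= eqxx /=.
  by case: (vs i) Hm => //= a l _; rewrite drop0.
by rewrite size_drop; case: (vs i) Hm => //= a l; rewrite subSS subn0.
Qed.

Lemma Forall_nseq A (a : A) l : List.Forall (fun v => v = a) l -> l = nseq (size l) a.
Proof. by elim=> //= b l' -> _ {1}->. Qed.

Lemma fwd k (C : term k) (V : 'I_k -> term 0) (HV : forall i, is_value (V i)) :
  forall t, taylor (fill C V) t -> exists c vs, [/\ taylor C c,
    (forall i, size (vs i) = degs i c /\ List.Forall (valT (V i)) (vs i)) &
    fills c vs = t].
Proof.
elim: C => [x|i|x C0 IH|C1 IH1 C2 IH2] t /= H.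
- inversion H; subst.
  have F : List.Forall (fun v => v = RVar x) (nseq n (@RVar k x)).
    by elim: n {H} => /= [|n IH]; constructor.
  exists (RBag (nseq n (RVar x))), (fun _ => nil); split.
  + by constructor.
  + by move=> i; rewrite degs_bag (degsl_var i F); split => //; constructor.
  + rewrite fills_bag (fillsl_var _ F); congr RBag.
    by elim: n {H F} => //= n ->.
- have [l [E F]] := val_taylor (HV i) H; subst.
  exists (RBag (nseq (size l) (RHole i))), (fun j => if j == i then l else nil); split.
  + by constructor.
  + move=> j; rewrite degs_bag degsl_hole; case: eqP => [->|_].
      by rewrite mul1n.
    by rewrite mul0n; split => //; constructor.
  + by rewrite fills_bag fillsl_hole eqxx ?take_size.
- inversion H as [| |x0 M0 ss H2|]; subst.
  have [cs [vs [Hcs Hvs E]]] : exists cs vs, [/\ (forall c, List.In c cs -> taylor C0 c),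
       (forall i, size (vs i) = degsl i (map (RLam x) cs) /\ List.Forall (valT (V i)) (vs i)) &
       fillsl (map (RLam x) cs) vs = map (RLam x) ss].
    elim: ss {H} H2 => [|a ss IHs] H2.
      by exists nil, (fun _ => nil); split => // i; split => //; constructor.
    have [c0 [vs0 [Hc0 Hvs0 E0]]] := IH a (H2 a (or_introl erefl)).
    have [cs [vs1 [Hcs Hvs1 E1]]] := IHs (fun s Hs => H2 s (or_intror Hs)).
    exists (c0 :: cs), (fun i => vs0 i ++ vs1 i); split.
    + by move=> c [<-|Hc]; [exact: Hc0 | exact: Hcs].
    + move=> i /=; rewrite size_cat (proj1 (Hvs0 i)) (proj1 (Hvs1 i)); split => //.
      exact: Forall_cat (proj2 (Hvs0 i)) (proj2 (Hvs1 i)).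
    + rewrite /=.
      have -> : (fun i => take (degs i c0) (vs0 i ++ vs1 i)) = vs0.
        by apply: functional_extensionality => i; rewrite take_size_cat // (proj1 (Hvs0 i)).
      have -> : (fun i => drop (degs i c0) (vs0 i ++ vs1 i)) = vs1.
        by apply: functional_extensionality => i; rewrite drop_size_cat // (proj1 (Hvs0 i)).
      by rewrite E0 E1.
  exists (RBag (map (RLam x) cs)), vs; split.
  + by constructor.
  + by move=> i; rewrite degs_bag.
  + by rewrite fills_bag E.
- inversion H as [| | |M1 M2 s1 s2 H1 H2]; subst.
  have [c1 [vs1 [Hc1 Hvs1 E1]]] := IH1 _ H1.
  have [c2 [vs2 [Hc2 Hvs2 E2]]] := IH2 _ H2.
  exists (RApp c1 c2), (fun i => vs1 i ++ vs2 i); split.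
  + by constructor.
  + move=> i /=; rewrite size_cat (proj1 (Hvs1 i)) (proj1 (Hvs2 i)); split => //.
    exact: Forall_cat (proj2 (Hvs1 i)) (proj2 (Hvs2 i)).
  + rewrite /=.
    have -> : (fun i => take (degs i c1) (vs1 i ++ vs2 i)) = vs1.
      by apply: functional_extensionality => i; rewrite take_size_cat // (proj1 (Hvs1 i)).
    have -> : (fun i => drop (degs i c1) (vs1 i ++ vs2 i)) = vs2.
      by apply: functional_extensionality => i; rewrite drop_size_cat // (proj1 (Hvs1 i)).
    by rewrite E1 E2.
Qed.

Lemma rigidv_nseq k (w : rval k) n lt :
  (forall w', rigidv w w' -> w' = w) ->
  List.Forall2 (@rigidv k) (nseq n w) lt -> List.Forall (fun v => v = w) lt.
Proof.
move=> Hw; elim: n lt => [|n IH] lt /= F; inversion F; subst; constructor.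
  exact: Hw.
exact: IH.
Qed.

Lemma rigidv_map_lam k x (ss : list (rterm k)) lt :
  List.Forall2 (@rigidv k) (map (RLam x) ss) lt ->
  exists cts, lt = map (RLam x) cts /\ List.Forall2 (@rigids k) ss cts.
Proof.
elim: ss lt => [|s ss IH] lt /= F; inversion F as [|a b l1 l2 Hab Hr]; subst.
  by exists nil; split => //; constructor.
inversion Hab as [| |x0 c0 ct0 Hc]; subst.
have [cts [E F2]] := IH _ Hr; subst.
by exists (ct0 :: cts); split => //; constructor.
Qed.

Lemma map_List A B (f : A -> B) l : map f l = List.map f l.
Proof. by elim: l => //= a l ->. Qed.

Lemma back k (C : term k) (V : 'I_k -> term 0) (HV : forall i, is_value (V i)) :
  forall c ct vs, taylor C c -> rigids c ct ->
  (forall i, size (vs i) = degs i ct /\ List.Forall (valT (V i)) (vs i)) ->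
  exists t, taylor (fill C V) t /\ reqs (fills ct vs) t.
Proof.
elim: C => [x|i|x C0 IH|C1 IH1 C2 IH2] c ct vs Hc Hct Hvs /=.
- inversion Hc; subst.
  inversion Hct as [|l0 lt lts F P]; subst.
  have F1 : List.Forall (fun v => v = RVar x) lts.
    apply: (Permutation_Forall P); apply: (rigidv_nseq _ F).
    by move=> w' H; inversion H.
  rewrite fills_bag (fillsl_var _ F1).
  exists (RBag (nseq (size lts) (RVar x))); split; first by constructor.
  have -> : map (fun _ : rval k => @RVar 0 x) lts = nseq (size lts) (RVar x).
    by elim: F1 {F P Hct Hvs} => //= a l' _ _ ->.
  exact: reqs_refl.
- inversion Hc; subst.
  inversion Hct as [|l0 lt lts F P]; subst.
  have F1 : List.Forall (fun v => v = RHole i) lts.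
    apply: (Permutation_Forall P); apply: (rigidv_nseq _ F).
    by move=> w' H; inversion H.
  have [Hs Fv] := Hvs i.
  rewrite (Forall_nseq F1) degs_bag degsl_hole eqxx mul1n in Hs.
  rewrite fills_bag (Forall_nseq F1) fillsl_hole -Hs ?take_size //.
  exact: val_inT (HV i) Fv.
- inversion Hc as [| |x0 M0 ss Hss|]; subst.
  inversion Hct as [|l0 lt lts F P]; subst.
  have [cts [E F2]] := rigidv_map_lam F; subst.
  have Pm : Permutation lts (List.map (RLam x) cts).
    by rewrite -map_List; exact: Permutation_sym P.
  have [cts' [E' Pc]] := @Permutation_map_inv _ _ (RLam x) _ _ Pm; subst.
  rewrite -map_List in Hvs *.
  have [ss' [Ps F3]] := Permutation_Forall2 Pc (List.Forall2_flip F2).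
  have Hss' : forall s, List.In s ss' -> taylor C0 s.
    move=> s Hs; apply: Hss; exact: Permutation_in (Permutation_sym Ps) Hs.
  have F4 := List.Forall2_flip F3.
  have Hvs' : forall i, size (vs i) = degsl i (map (RLam x) cts') /\
       List.Forall (valT (V i)) (vs i).
    by move=> i; rewrite -degs_bag; exact: Hvs.
  clear Hc Hct Hss F P F2 F3 Pc Ps Hvs.
  have [ts [Hts F5]] : exists ts, (forall t, List.In t ts -> taylor (fill C0 V) t) /\
      List.Forall2 (@reqv 0) (fillsl (map (RLam x) cts') vs) (map (RLam x) ts).
    elim: F4 vs Hss' Hvs' => [|s ct0 ss'' cts'' Hr _ IHl] vs Hss' Hvs'.
      by exists nil; split => //; constructor.
    have Hd : forall i, degs i ct0 <= size (vs i).
      by move=> i; rewrite (proj1 (Hvs' i)) /= leq_addr.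
    have [t0 [Ht0 Hr0]] := IH s ct0 (fun i => take (degs i ct0) (vs i))
                            (Hss' s (or_introl erefl)) Hr
                            (fun i => conj (size_takel (Hd i)) (Forall_take _ (proj2 (Hvs' i)))).
    have [ts [Hts F5]] := IHl (fun i => drop (degs i ct0) (vs i))
                            (fun s0 Hs0 => Hss' s0 (or_intror Hs0))
                            (fun i => conj (etrans (size_drop _ _) (etrans (f_equal (subn ^~ _) (proj1 (Hvs' i))) (addKn _ _)))
                                           (Forall_drop _ (proj2 (Hvs' i)))).
    exists (t0 :: ts); split.
      by move=> t [<-|Ht]; [exact: Ht0 | exact: Hts].
    by constructor => //; constructor.
  exists (RBag (map (RLam x) ts)); split; first by constructor.
  rewrite fills_bag; exact: (@reqs_bag _ _ (map (RLam x) ts)).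
- inversion Hc as [| | |M1 M2 c1 c2 Hc1 Hc2]; subst.
  inversion Hct as [a1 a2 ct1 ct2 Hr1 Hr2|]; subst.
  have Hd : forall i, size (vs i) = degs i ct1 + degs i ct2 by move=> i; exact: proj1 (Hvs i).
  have [t1 [Ht1 E1]] := IH1 c1 ct1 (fun i => take (degs i ct1) (vs i)) Hc1 Hr1
     (fun i => conj (size_takel (eq_ind_r (leq (degs i ct1)) (leq_addr _ _) (Hd i)))
                    (Forall_take _ (proj2 (Hvs i)))).
  have [t2 [Ht2 E2]] := IH2 c2 ct2 (fun i => drop (degs i ct1) (vs i)) Hc2 Hr2
     (fun i => conj (etrans (size_drop _ _) (etrans (f_equal (subn ^~ _) (Hd i)) (addKn _ _)))
                    (Forall_drop _ (proj2 (Hvs i)))).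
  exists (RApp t1 t2); split; first by constructor.
  by constructor.
Qed.

Unset Implicit Arguments.

Theorem mainTheorem2 (k : nat) (C : term k) (V : 'I_k -> term 0)
  (HV : forall i, is_value (V i)) :
  forall s : rterm 0,
    inT (fill C V) s <->
    exists (c ct : rterm k) (vs : 'I_k -> list (rval 0)),
      [/\ taylor C c, rigids c ct,
          (forall i, size (vs i) = degs i c /\ inT (V i) (RBag (vs i)))
        & reqs s (fills ct vs)].
Proof.
move=> s; split.
- move=> [t [Ht Hr]].
  have [c [vs [Hc Hvs E]]] := fwd HV Ht.
  exists c, c, vs; split => //.
  + exact: rigids_refl.
  + move=> i; have [H1 H2] := Hvs i; split => //; exact: val_inT (HV i) H2.
  + by rewrite E.
- move=> [c [ct [vs [Hc Hct Hvs Hr]]]].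
  have [t [Ht Hr']] := back HV Hc Hct
    (fun i => conj (etrans (proj1 (Hvs i)) (rigid_deg Hct i)) (inT_val (HV i) (proj2 (Hvs i)))).
  exists t; split => //; exact: reqs_trans Hr Hr'.
Qed.
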